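(* Let $\mathcal{G}$ be a finite tree and let $i,j$ be adjacent nodes, with $d_i$ the degree of $i$ in $\mathcal{G}$. Let $\mathcal{G}_i$ be the connected component containing $i$ of the graph obtained from $\mathcal{G}$ by deleting the edge $(i,j)$, with edge set $\mathcal{E}(\mathcal{G}_i)$. Then the access time of the begrudgingly backtracking random walk from $i$ to $j$ is $$\tilde{\mathtt{t}}(i,j)=1+2|\mathcal{E}(\mathcal{G}_i)|\cdot\frac{d_i-1}{d_i}.$$
   Context: Begrudgingly backtracking random walk (BBRW) on $\mathcal{G}$: $x_1$ is uniform on the neighbors of $x_0$; for $n\ge0$, given $x_n=u,x_{n+1}=v$, $x_{n+2}$ is uniform on $\mathcal{N}(v)\setminus\{u\}$ if this set is nonempty, and $x_{n+2}=u$ otherwise. For a node $k$, $T_k=\min\{n\ge0:x_n=k\}$ and the access time is $\tilde{\mathtt{t}}(i,k)=\mathbb{E}[T_k\mid x_0=i]$. *)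

(* Defs.v *)
From HB Require Import structures.
From mathcomp Require Import all_boot all_order all_algebra.
From mathcomp Require Import boolp classical_sets reals constructive_ereal ereal sequences.
Set Implicit Arguments. Unset Strict Implicit. Unset Printing Implicit Defensive.
Import Order.TTheory GRing.Theory Num.Theory.

Local Open Scope ring_scope.

Section BBRW.
Variables (R : realType) (T : finType) (e : rel T).

Definition simple_graph := symmetric e /\ irreflexive e.

Definition is_tree :=
  (forall x y : T, connect e x y) /\
  (forall c : seq T, uniq c -> (3 <= size c)%N -> ~~ cycle e c).

Definition nbhd (v : T) : {set T} := [set w | e v w].
Definition deg (v : T) : nat := #|nbhd v|.

(* BBRW transition probability: P(x_{n+2} = w | x_n = u, x_{n+1} = v) *)
Definition bb_step (u v w : T) : R :=
  let A := nbhd v :\ u in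
  if #|A| == 0%N then (w == u)%:R else (w \in A)%:R / #|A|%:R.

Fixpoint tail_prob (u v : T) (s : seq T) : R :=
  if s is w :: s' then bb_step u v w * tail_prob v w s' else 1.

(* probability that (x_1,...,x_n) = s given x_0 = x0 *)
Definition path_prob (x0 : T) (s : seq T) : R :=
  if s is x1 :: s' then (e x0 x1)%:R / (deg x0)%:R * tail_prob x0 x1 s' else 1.

(* P(T_k = n | x_0 = i) *)
Definition hit_prob (i k : T) (n : nat) : R :=
  \sum_(s : n.-tuple T)
     path_prob i s * ((last i s == k) && all (fun x => x != k) (belast i s))%:R.

(* access time E[T_k | x_0 = i] in the extended reals:
   sum_n n P(T_k = n), or +oo if T_k = oo with positive probability *)
Definition access_time (i k : T) : \bar R :=
  if `[< (\sum_(0 <= n <oo) (hit_prob i k n)%:E = 1)%E >]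
  then (\sum_(0 <= n <oo) ((n%:R * hit_prob i k n)%:E))%E
  else (+oo)%E.

Definition del_edge (i j : T) : rel T :=
  fun u v => e u v && ([set u; v] != [set i; j]).

Definition comp_del (i j : T) : {set T} := [set u | connect (del_edge i j) i u].

Definition comp_edges (i j : T) : {set {set T}} :=
  [set [set p.1; p.2] | p in [set p : T * T |
     [&& p.1 \in comp_del i j, p.2 \in comp_del i j & del_edge i j p.1 p.2]]].

End BBRW.

(* Main.v *)
Require Import Defs.
From HB Require Import structures.
From mathcomp Require Import all_boot all_order all_algebra.
From mathcomp Require Import boolp classical_sets reals constructive_ereal ereal sequences.
From mathcomp Require Import topology normedtype.
From mathcomp Require Import ring lra.
Import Order.TTheory GRing.Theory Num.Theory.
Set Implicit Arguments. Unset Strict Implicit. Unset Printing Implicit Defensive.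
Local Open Scope ring_scope.

Lemma sum_tupleS (R : realType) (T : finType) n (F : n.+1.-tuple T -> R) :
  \sum_(s : n.+1.-tuple T) F s = \sum_(w : T) \sum_(t : n.-tuple T) F [tuple of w :: t].
Proof.
rewrite pair_big /=.
rewrite (reindex (fun p : T * n.-tuple T => [tuple of p.1 :: p.2])) //=.
exists (fun s : n.+1.-tuple T => (thead s, [tuple of behead s])).
  by move=> [x t] _ /=; rewrite theadE; congr pair; apply/val_inj.
by move=> s _; apply/val_inj => /=; case: s => [[|a l] //].
Qed.

Lemma sum_tuple0 (R : realType) (T : finType) (F : 0.-tuple T -> R) :
  \sum_(s : 0.-tuple T) F s = F [tuple].
Proof.
by rewrite (big_pred1 [tuple]) // => s; apply/esym/eqP; exact: tuple0.
Qed.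

Lemma series_eq_G (R : realType) (u : nat -> R) (b c : R) :
  (forall n, 0 <= u n) -> 0 <= c ->
  (forall N, \sum_(0 <= k < N) u k <= b) ->
  (forall M, (0 < M)%N -> exists N, b - c / M%:R <= \sum_(0 <= k < N) u k) ->
  (\sum_(0 <= k <oo) (u k)%:E = b%:E)%E.
Proof.
move=> u0 c0 ub lb.
have u0E : forall n, (0 <= n)%N -> true -> (0 <= (u n)%:E)%E.
  by move=> n _ _; rewrite lee_fin.
have Lle : (\sum_(0 <= k <oo) (u k)%:E <= b%:E)%E.
  apply: (lime_le (is_cvg_nneseries u0E)); apply: nearW => k.
  by rewrite sumEFin lee_fin.
have Lge : forall M, (0 < M)%N -> ((b - c / M%:R)%:E <= \sum_(0 <= k <oo) (u k)%:E)%E.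
  move=> M M0; have [N HN] := lb M M0.
  apply: (le_trans _ (nneseries_lim_ge N u0E)).
  by rewrite big_mkcond /= sumEFin lee_fin.
have L0 : (0 <= \sum_(0 <= k <oo) (u k)%:E)%E by apply: nneseries_ge0.
set L := (\sum_(0 <= k <oo) (u k)%:E)%E in Lle Lge L0 *.
have Lfin : L = (fine L)%:E.
  by rewrite fineK // ge0_fin_numE // (le_lt_trans Lle) // ltry.
rewrite Lfin; congr (_%:E); apply/eqP; rewrite eq_le.
have -> : fine L <= b by rewrite -lee_fin -Lfin.
apply/ler_addgt0Pr => eps eps0.
set M := (Num.truncn (c / eps)).+1.
have := Lge M isT; rewrite Lfin lee_fin => H.
rewrite -lerBlDr (le_trans _ H) // lerB // ler_pdivrMr ?ltr0n //.
rewrite mulrC -ler_pdivrMr //. 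
exact/ltW/truncnS_gt.
Qed.

Section Chain.
Variables (R : realType) (T : finType) (e : rel T) (j : T).
Local Notation bb := (bb_step R e).

Lemma bb_ge0 u v w : 0 <= bb u v w.
Proof. by rewrite /bb_step; case: ifP => _; rewrite ?divr_ge0 ?ler0n. Qed.

Lemma bb_sum1 u v : \sum_w bb u v w = 1.
Proof.
case A0: (#|nbhd e v :\ u| == 0%N).
  rewrite (eq_bigr (fun w => (w == u)%:R)); last by move=> w _; rewrite /bb_step /= A0.
  by rewrite (bigD1 u) //= eqxx big1 ?addr0 // => w /negbTE ->.
rewrite (eq_bigr (fun w => (w \in nbhd e v :\ u)%:R / #|nbhd e v :\ u|%:R));
  last by move=> w _; rewrite /bb_step /= A0.
rewrite -big_distrl /= -natr_sum.
rewrite (bigID (fun w => w \in nbhd e v :\ u)) /= addnC big1 ?add0n; last first.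
  by move=> w /negbTE ->.
rewrite (eq_bigr (fun _ => 1%N)); last by move=> w ->.
by rewrite sum1_card mulfV // pnatr_eq0 A0.
Qed.

Definition fh n u v : R := \sum_(s : n.-tuple T) tail_prob R e u v s *
  ((last v s == j) && all (fun x => x != j) (belast v s))%:R.

Fixpoint qs n u v : R :=
  if n is n'.+1 then (v != j)%:R * \sum_w bb u v w * qs n' v w
  else (v != j)%:R.

Lemma fh0 u v : fh 0 u v = (v == j)%:R.
Proof. by rewrite /fh sum_tuple0 /= mul1r andbT. Qed.

Lemma fhS n u v : fh n.+1 u v = (v != j)%:R * \sum_w bb u v w * fh n v w.
Proof.
rewrite /fh sum_tupleS big_distrr /=; apply: eq_bigr => w _.
rewrite big_distrr /= big_distrr /=; apply: eq_bigr => t _ /=.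
case: (v =P j) => [->|/eqP vj] /=; first by rewrite andbF mulr0 mul0r.
by rewrite mul1r mulrA.
Qed.

Lemma tail_ge0 u v s : 0 <= tail_prob R e u v s.
Proof.
elim: s u v => [|w s IH] u v /=; first exact: ler01.
by rewrite mulr_ge0 ?bb_ge0.
Qed.

Lemma fh_ge0 n u v : 0 <= fh n u v.
Proof. by rewrite /fh sumr_ge0 // => s _; rewrite mulr_ge0 ?tail_ge0 ?ler0n. Qed.

Lemma fh_0q u v : fh 0 u v = 1 - qs 0 u v.
Proof. by rewrite fh0 /=; case: (v == j); rewrite /= ?subr0 ?subrr. Qed.

Lemma bb_lin u v (a b : T -> R) :
  \sum_w bb u v w * (a w - b w) = \sum_w bb u v w * a w - \sum_w bb u v w * b w.
Proof. by rewrite -sumrB; apply: eq_bigr => w _; rewrite mulrBr. Qed.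

Lemma fh_Sq n u v : fh n.+1 u v = qs n u v - qs n.+1 u v.
Proof.
elim: n u v => [|n IH] u v.
  rewrite fhS (eq_bigr (fun w => bb u v w * (1 - qs 0 v w))); last first.
    by move=> w _; rewrite fh_0q.
  by rewrite bb_lin (eq_bigr (fun w => bb u v w)) ?bb_sum1 /= ?mulrBr ?mulr1 // => w; rewrite mulr1.
rewrite fhS (eq_bigr (fun w => bb u v w * (qs n v w - qs n.+1 v w))); last first.
  by move=> w _; rewrite IH.
by rewrite bb_lin mulrBr.
Qed.

Lemma qs_ge0 n u v : 0 <= qs n u v.
Proof.
elim: n u v => [|n IH] u v /=; first exact: ler0n.
by rewrite mulr_ge0 ?ler0n // sumr_ge0 // => w _; rewrite mulr_ge0 ?bb_ge0.
Qed.

Lemma qs_S n u v : qs n.+1 u v <= qs n u v.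
Proof. by rewrite -subr_ge0 -fh_Sq fh_ge0. Qed.

Lemma qs_mono m n u v : (m <= n)%N -> qs n u v <= qs m u v.
Proof.
move=> /subnK <-; elim: (n - m)%N => [|k IH] //.
by rewrite addSn (le_trans (qs_S _ _ _)).
Qed.

Lemma sum_fh N u v : \sum_(0 <= k < N.+1) fh k u v = 1 - qs N u v.
Proof.
elim: N => [|N IH]; first by rewrite big_nat1 fh_0q.
by rewrite big_nat_recr //= IH fh_Sq addrA subrK.
Qed.

Lemma sum_diff N u v : \sum_(0 <= m < N) (qs m u v - qs N u v) =
  \sum_(0 <= m < N) qs m u v - N%:R * qs N u v.
Proof. by rewrite sumrB sumr_const_nat subn0 mulr_natl. Qed.

Lemma sum_kfh N u v : \sum_(0 <= k < N.+1) k%:R * fh k u v =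
  \sum_(0 <= m < N) (qs m u v - qs N u v).
Proof.
rewrite sum_diff; elim: N => [|N IH]; first by rewrite big_nat1 big_geq // !mul0r subr0.
rewrite big_nat_recr //= IH fh_Sq.
rewrite [X in _ = X - _]big_nat_recr //=.
rewrite -[N.+1]addn1 natrD.
set a := \sum_(0 <= i < N) qs i u v. set b := qs N u v. set c := qs N.+1 u v.
lra.
Qed.

Variables (tau : T -> T -> R) (Good : T -> T -> bool).
Hypothesis H1 : forall u v, Good u v ->
  tau u v = (v != j)%:R * (1 + \sum_w bb u v w * tau v w).
Hypothesis H2 : forall u v w, Good u v -> v != j -> bb u v w != 0 -> Good v w.
Hypothesis H3 : forall u v, Good u v -> 0 <= tau u v.

Fixpoint rs n u v : R :=
  if n is n'.+1 then (v != j)%:R * \sum_w bb u v w * rs n' v w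
  else tau u v.

Lemma step_eq u v (F G : T -> R) : Good u v -> (forall w, Good v w -> F w = G w) ->
  (v != j)%:R * \sum_w bb u v w * F w = (v != j)%:R * \sum_w bb u v w * G w.
Proof.
move=> Guv FG; case vj: (v != j); last by rewrite !mul0r.
congr (_ * _); apply: eq_bigr => w _.
case b0: (bb u v w == 0); first by rewrite (eqP b0) !mul0r.
by rewrite FG // (H2 Guv) ?vj ?b0.
Qed.

Lemma step_le u v (F G : T -> R) : Good u v -> (forall w, Good v w -> F w <= G w) ->
  (v != j)%:R * \sum_w bb u v w * F w <= (v != j)%:R * \sum_w bb u v w * G w.
Proof.
move=> Guv FG; case vj: (v != j); last by rewrite !mul0r.
rewrite !mul1r; apply: ler_sum => w _.
case b0: (bb u v w == 0); first by rewrite (eqP b0) !mul0r.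
by rewrite ler_wpM2l ?bb_ge0 // FG // (H2 Guv) ?vj ?b0.
Qed.

Lemma tau_dec N u v : Good u v -> tau u v = \sum_(0 <= k < N) qs k u v + rs N u v.
Proof.
elim: N u v => [|N IH] u v Guv; first by rewrite big_geq // add0r.
rewrite H1 // mulrDr mulr1 (@step_eq u v (tau v) (fun w => \sum_(0 <= k < N) qs k v w + rs N v w)) //; last first.
  by move=> w Gw; rewrite (IH v w).
rewrite big_nat_recl //= -addrA; congr (_ + _).
rewrite (eq_bigr (fun w => \sum_(0 <= k < N) bb u v w * qs k v w + bb u v w * rs N v w)); last first.
  by move=> w _; rewrite mulrDr big_distrr.
rewrite big_split /= mulrDr; congr (_ + _).
rewrite exchange_big /= big_distrr /=; apply: eq_bigr => k _.
by [].
Qed.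

Lemma rs_ge0 N u v : Good u v -> 0 <= rs N u v.
Proof.
elim: N u v => [|N IH] u v Guv /=; first exact: H3.
rewrite (le_trans _ (@step_le u v (fun _ => 0) (rs N v) Guv _)) //.
  by rewrite big1 ?mulr0 // => w _; rewrite mulr0.
by move=> w Gw; apply: IH.
Qed.

Definition Mx : R := \sum_(p : T * T) `|tau p.1 p.2|.

Lemma tau_le_Mx u v : tau u v <= Mx.
Proof.
rewrite /Mx (bigD1 (u, v)) //= (le_trans (ler_norm _)) // lerDl.
by rewrite sumr_ge0.
Qed.

Lemma Mx_ge0 : 0 <= Mx.
Proof. by rewrite sumr_ge0. Qed.

Lemma rs_le N u v : Good u v -> rs N u v <= Mx * qs N u v.
Proof.
elim: N u v => [|N IH] u v Guv /=.
  case vj: (v != j); first by rewrite mulr1 tau_le_Mx.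
  by rewrite H1 // vj !mul0r mulr0.
apply: (le_trans (@step_le u v (rs N v) (fun w => Mx * qs N v w) Guv _)).
  by move=> w Gw; apply: IH.
rewrite (eq_bigr (fun w => Mx * (bb u v w * qs N v w))); last by move=> w _; rewrite mulrCA.
by rewrite -big_distrr /= mulrCA.
Qed.

Lemma S_le N u v : Good u v -> \sum_(0 <= k < N) qs k u v <= tau u v.
Proof. by move=> G; rewrite (tau_dec N G) lerDl rs_ge0. Qed.

Lemma qN_le N u v : Good u v -> N%:R * qs N u v <= tau u v.
Proof.
move=> G; apply: le_trans (S_le N G).
rewrite mulr_natl -[X in X *+ _]subr0 -(subn0 N) -sumr_const_nat subn0; apply: ler_sum_nat => k /andP[_ kN]; rewrite subr0.
by apply: qs_mono; apply: ltnW.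
Qed.

Lemma q_le_div N u v : Good u v -> (0 < N)%N -> qs N u v <= tau u v / N%:R.
Proof. by move=> G N0; rewrite ler_pdivlMr ?ltr0n // mulrC qN_le. Qed.

Lemma F1 u v : Good u v -> (\sum_(0 <= n <oo) (fh n u v)%:E = 1%:E)%E.
Proof.
move=> G; apply: (@series_eq_G _ _ 1 (tau u v)).
- by move=> n; apply: fh_ge0.
- exact: H3.
- case=> [|N]; first by rewrite big_geq // ler01.
  by rewrite sum_fh gerBl qs_ge0.
- move=> M M0; exists M.+1; rewrite sum_fh lerB //.
  exact: q_le_div.
Qed.

Lemma F2 u v : Good u v ->
  (\sum_(0 <= n <oo) (n%:R * fh n u v)%:E = (tau u v)%:E)%E.
Proof.
move=> G; apply: (@series_eq_G _ _ _ ((Mx + 1) * tau u v)).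
- by move=> n; rewrite mulr_ge0 ?ler0n ?fh_ge0.
- by rewrite mulr_ge0 ?H3 // addr_ge0 ?Mx_ge0.
- case=> [|N]; first by rewrite big_geq // H3.
  rewrite sum_kfh sum_diff (le_trans _ (S_le N G)) // gerBl.
  by rewrite mulr_ge0 ?ler0n ?qs_ge0.
move=> M M0; exists (M * M).+1; rewrite sum_kfh.
have MM : (M <= M * M)%N by rewrite leq_pmulr.
rewrite (big_cat_nat (leq0n M) MM) /=.
have ext : 0 <= \sum_(M <= i < M * M) (qs i u v - qs (M * M) u v).
  by rewrite big_nat_cond; apply: sumr_ge0 => k /andP[/andP[_ kN] _]; rewrite subr_ge0 qs_mono // ltnW.
move: ext.
rewrite [X in _ <= X + _]sumrB sumr_const_nat subn0 => ext.
have tdec := tau_dec M G.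
have r1 := rs_le M G.
have q1 := q_le_div G M0.
have M0' : (0 < M * M)%N by rewrite muln_gt0 M0.
have q2 := q_le_div G M0'.
set m := M%:R in q1 q2 *.
have m0 : 0 < m by rewrite ltr0n.
rewrite natrM -/m in q2.
have e1 : m * (tau u v / (m * m)) = tau u v / m by field; rewrite gt_eqF.
have e2 : (Mx + 1) * tau u v / m = Mx * (tau u v / m) + tau u v / m by rewrite mulrDl mul1r mulrA mulrDl.
rewrite -[_ *+ M]mulr_natl -/m e2.
have : m * qs (M * M) u v <= tau u v / m by rewrite -e1 ler_wpM2l // ltW.
have : rs M u v <= Mx * (tau u v / m).
  by apply: (le_trans r1); rewrite ler_wpM2l ?Mx_ge0.
rewrite tdec; lra.
Qed.

End Chain.

Section Tree.
Variables (T : finType) (e : rel T).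
Hypothesis Hsym : symmetric e.
Hypothesis Hirr : irreflexive e.
Hypothesis Hconn : forall x y : T, connect e x y.
Hypothesis Hacyc : forall c : seq T, uniq c -> (3 <= size c)%N -> ~~ cycle e c.

Local Notation del := (del_edge e).
Local Notation cd := (comp_del e).

Lemma eS a b : e a b -> e b a.
Proof. by rewrite Hsym. Qed.

Lemma in_cd a b x : (x \in cd a b) = connect (del a b) a x.
Proof. by rewrite inE. Qed.

Lemma pairC (x y : T) : [set x; y] = [set y; x].
Proof. by rewrite finset.setUC. Qed.

Lemma delC a b : del a b =2 del b a.
Proof. by move=> x y; rewrite /del_edge (pairC a b). Qed.

Lemma del_sym a b : symmetric (del a b).
Proof. by move=> x y; rewrite /del_edge Hsym (pairC x y). Qed.

Lemma del_e a b x y : del a b x y -> e x y.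
Proof. by case/andP. Qed.

Lemma neq_pair (a b x y : T) : a != x -> a != y -> [set x; y] != [set a; b].
Proof.
move=> ax ay; apply/negP => /eqP H.
have : a \in [set a; b] by rewrite !inE eqxx.
by rewrite -H !inE (negbTE ax) (negbTE ay).
Qed.

Lemma neq_pair' (a b x y : T) : b != x -> b != y -> [set x; y] != [set a; b].
Proof. by move=> bx byy; rewrite (pairC a b); apply: neq_pair. Qed.

Lemma path_avoid a b y p : path e y p -> a \notin y :: p -> path (del a b) y p.
Proof.
elim: p y => [|z p IH] y //= /andP[eyz pz].
rewrite !inE !negb_or => /andP[ay /andP[az ap]].
rewrite /del_edge eyz (neq_pair _ ay az) /=.
by apply: IH => //; rewrite inE negb_or az.
Qed.

Lemma conn_closed (r : rel T) (A : pred T) a x : A a ->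
  (forall y z, A y -> connect r a y -> r y z -> A z) -> connect r a x -> A x.
Proof.
move=> Aa cl /connectP [p pp ->].
suff: forall y, A y -> connect r a y -> path r y p -> A (last y p) by apply.
elim: p {pp} => [|z p IH] y Ay ay //= /andP[ryz pz].
apply: IH pz; [exact: cl Ay ay ryz | exact: connect_trans ay (connect1 ryz)].
Qed.

Lemma AC a b : e a b -> ~~ connect (del a b) a b.
Proof.
move=> eab; apply/negP => /connectP [p pp].
case: (shortenP pp) => p' pp' up' _ lp'.
case: p' pp' up' lp' => [|c [|d p'']] pp' up' lp'.
- by move: eab; rewrite lp' Hirr.
- by move: pp'; rewrite /= lp' /del_edge eqxx andbF.
- have := Hacyc up' isT; rewrite /= rcons_path.
  have := sub_path (@del_e a b) pp'; rewrite /= => /and3P[-> -> ->].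
  by move: lp'; rewrite /= => <-; rewrite Hsym eab.
Qed.

Lemma S1 a b : e a b -> b \notin cd a b.
Proof. by move=> eab; rewrite in_cd AC. Qed.

Lemma cd_self a b : a \in cd a b.
Proof. by rewrite in_cd connect0. Qed.

Lemma S2 a b x z : x \in cd a b -> e x z -> [set x; z] != [set a; b] -> z \in cd a b.
Proof.
rewrite !in_cd => ax xz ne; apply: connect_trans ax (connect1 _).
by rewrite /del_edge xz ne.
Qed.

Lemma S4 a b x : e a b -> x \in cd a b -> x \notin cd b a.
Proof.
move=> eab; rewrite !in_cd => ax; apply/negP => bx.
have bx' : connect (del a b) b x by rewrite (eq_connect (delC a b)).
have xb : connect (del a b) x b by rewrite (sym_connect_sym (@del_sym a b)).
by move: (AC eab); rewrite (connect_trans ax xb).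
Qed.

Lemma S3 a b x : e a b -> (x \in cd a b) || (x \in cd b a).
Proof.
move=> eab; have /connectP [p pp] := Hconn a x.
case: (shortenP pp) => p' pp' up' _ ->.
case: p' pp' up' => [|c p''] /= pp' up'; first by rewrite cd_self.
move: pp' => /andP [eac pc]; move: up'; rewrite inE negb_or => /andP[/andP [ac ap] _].
case: (c =P b) => [cb|/eqP cb].
  apply/orP; right; rewrite in_cd; apply/connectP; exists p'' => //; last by rewrite cb.
  rewrite -cb; apply: (@sub_path _ (del a c)); first by move=> x' y'; rewrite delC.
  by apply: path_avoid => //; rewrite inE negb_or ac.
apply/orP; left; rewrite in_cd; apply/connectP; exists (c :: p'') => //=.
rewrite /del_edge eac neq_pair' ?(eq_sym b) ?cb //=.
  by apply: path_avoid => //; rewrite inE negb_or ac.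
by move: eab; apply: contraL => /eqP ->; rewrite Hirr.
Qed.

Lemma S5 v u c : e v u -> e v c -> c != u -> {subset cd c v <= cd v u}.
Proof.
move=> evu evc cu x; rewrite in_cd => cx.
apply: (@conn_closed (del c v) (mem (cd v u)) c x _ _ cx).
  apply: (S2 (cd_self v u) evc); apply: neq_pair'.
    by move: evu; apply: contraL => /eqP ->; rewrite Hirr.
  by rewrite eq_sym.
move=> y z yvu cy dyz.
have yv : v != y by apply/eqP => vy; move: (S1 (eS evc)); rewrite in_cd; rewrite -vy in cy; rewrite cy.
have cz : connect (del c v) c z by apply: connect_trans cy (connect1 dyz).
have zv : v != z by apply/eqP => vz; move: (S1 (eS evc)); rewrite in_cd; rewrite -vz in cz; rewrite cz.
exact: (S2 yvu (del_e dyz) (neq_pair _ yv zv)).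
Qed.

Lemma S6 v c c' x : e v c -> e v c' -> c != c' -> x \in cd c v -> x \notin cd c' v.
Proof.
by move=> evc evc' cc' xc; apply: (S4 evc'); apply: (S5 evc' evc cc').
Qed.

Lemma S7 v u x : e v u -> x \in cd v u -> x != v ->
  exists2 c, e v c && (c != u) & x \in cd c v.
Proof.
move=> evu; rewrite in_cd => vx xv.
pose A := fun y => (y == v) || [exists c, [&& e v c, c != u & y \in cd c v]].
have : A x.
  apply: (@conn_closed (del v u) A v x _ _ vx); first by rewrite /A eqxx.
  move=> y z /orP [/eqP ->|/existsP [c /and3P [evc cu yc]]] _ dyz.
    apply/orP; right; apply/existsP; exists z.
    move: dyz => /andP [evz ne]; rewrite evz cd_self andbT /=.
    by apply: contraNneq ne => ->.
  case: (z =P v) => [->|/eqP zv]; first by rewrite /A eqxx.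
  apply/orP; right; apply/existsP; exists c; rewrite evc cu /=.
  apply: (S2 yc (del_e dyz)); apply: neq_pair'; last by rewrite eq_sym.
  by apply/eqP => vy; move: (S1 (eS evc)); rewrite -vy in yc; rewrite yc.
by rewrite /A (negbTE xv) /= => /existsP [c /and3P [evc cu xc]]; exists c; rewrite ?evc.
Qed.

Local Notation ce := (comp_edges e).

Lemma ceP a b (E : {set T}) : reflect
  (exists x, exists y, [/\ E = [set x; y], x \in cd a b, y \in cd a b & del a b x y])
  (E \in ce a b).
Proof.
apply: (iffP imsetP).
  move=> [[x y]]; rewrite inE /= => /and3P [xc yc dxy] ->.
  by exists x, y.
move=> [x [y [-> xc yc dxy]]]; exists (x, y) => //.
by rewrite inE /= xc yc dxy.
Qed.

Lemma card_sum_ind (A : {set {set T}}) : #|A| = (\sum_E (E \in A))%N.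
Proof.
rewrite -sum1_card big_mkcond /=; apply: eq_bigr => E _.
by case: (E \in A).
Qed.

Lemma sum_eq1 (X : {set T}) : (\sum_(E : {set T}) (E == X))%N = 1%N.
Proof.
rewrite (bigD1 X) //= eqxx big1 // => E /negbTE -> //.
Qed.

Lemma pair_eq (v c c' : T) : v != c -> [set v; c] == [set v; c'] -> c = c'.
Proof.
move=> vc /eqP H; have : c \in [set v; c'] by rewrite -H !inE eqxx orbT.
by rewrite !inE eq_sym (negbTE vc) /= => /eqP.
Qed.

Lemma ce_notv c v E : e v c -> E \in ce c v -> v \notin E.
Proof.
move=> evc /ceP [x [y [-> xc yc _]]]; rewrite !inE negb_or.
apply/andP; split; apply/eqP => vx; move: (S1 (eS evc)).
  by rewrite -vx in xc; rewrite xc.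
by rewrite -vx in yc; rewrite yc.
Qed.

Lemma ce_point v u E : e v u ->
  (E \in ce v u : nat) =
  (\sum_(c in nbhd e v :\ u) ((E == [set v; c]) + (E \in ce c v)))%N.
Proof.
move=> evu.
have inN c : (c \in nbhd e v :\ u) = (c != u) && e v c by rewrite !inE.
have vnu : v != u by apply: contraTneq evu => ->; rewrite Hirr.
case: (boolP (E \in ce v u)) => Ein; last first.
  rewrite big1 // => c; rewrite inN => /andP [cu evc].
  have -> : (E == [set v; c]) = false.
    apply: contraNF Ein => /eqP ->; apply/ceP; exists v, c; split => //.
    - exact: cd_self.
    - apply: (S2 (cd_self v u) evc); apply: neq_pair'; first by rewrite eq_sym.
      by rewrite eq_sym.
    - rewrite /del_edge evc; apply: neq_pair'; first by rewrite eq_sym.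
      by rewrite eq_sym.
  have -> : (E \in ce c v) = false.
    apply: contraNF Ein => /ceP [x [y [-> xc yc dxy]]]; apply/ceP; exists x, y.
    have xv : v != x by apply/eqP => vx; move: (S1 (eS evc)); rewrite -vx in xc; rewrite xc.
    have yv : v != y by apply/eqP => vy; move: (S1 (eS evc)); rewrite -vy in yc; rewrite yc.
    split => //; try exact: (S5 evu evc cu).
    by rewrite /del_edge (del_e dxy) neq_pair.
  by [].
move: (Ein) => /ceP [x [y [Edef xc yc dxy]]].
case: (boolP (v \in E)) => vE.
  have [c [Ec evc cu]] : exists c, [/\ E = [set v; c], e v c & c != u].
    move: vE; rewrite Edef !inE => /orP [/eqP vx|/eqP vy].
      exists y; rewrite -vx; split => //; first by rewrite -vx in dxy; exact: (del_e dxy).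
      apply/eqP => yu; move: dxy; rewrite /del_edge -vx yu eqxx andbF //.
    exists x; rewrite -vy; split; first by rewrite pairC.
      by rewrite -vy in dxy; exact: eS (del_e dxy).
    apply/eqP => xu; move: dxy; rewrite /del_edge -vy xu (pairC u v) eqxx andbF //.
  have vc : v != c by apply: contraTneq evc => ->; rewrite Hirr.
  rewrite (bigD1 c) /=; last by rewrite inN cu evc.
  rewrite Ec eqxx /= -Ec.
  have -> : (E \in ce c v) = false by apply: contraTF vE => H; exact: ce_notv H.
  rewrite big1 // => c' /andP [c'N c'c]; move: c'N; rewrite inN => /andP [c'u evc'].
  have -> : (E \in ce c' v) = false by apply: contraTF vE => H; exact: ce_notv H.
  rewrite Ec; case: (boolP ([set v; c] == [set v; c'])) => // /(pair_eq vc) cc'.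
  by rewrite cc' eqxx in c'c.
have xv : x != v by apply: contraNneq vE => <-; rewrite Edef !inE eqxx.
have yv : v != y by apply: contraNneq vE => ->; rewrite Edef !inE eqxx orbT.
have [c /andP [evc cu] xc'] := S7 evu xc xv.
have yc' : y \in cd c v.
  apply: (S2 xc' (del_e dxy)); apply: neq_pair'; by rewrite // eq_sym.
have Ec : E \in ce c v.
  apply/ceP; exists x, y; split => //; rewrite /del_edge (del_e dxy).
  by apply: neq_pair'; rewrite // eq_sym.
rewrite (bigD1 c) /=; last by rewrite inN cu evc.
have -> : (E == [set v; c]) = false.
  by apply: contraNF vE => /eqP ->; rewrite !inE eqxx.
rewrite Ec big1 // => c' /andP [c'N c'c]; move: c'N; rewrite inN => /andP [c'u evc'].
have -> : (E == [set v; c']) = false.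
  by apply: contraNF vE => /eqP ->; rewrite !inE eqxx.
have -> // : (E \in ce c' v) = false.
have cc' : c != c' by rewrite eq_sym.
have xn := S6 evc evc' cc' xc'.
apply/negbTE/negP => /ceP [x' [y' [E' x'c y'c _]]].
have : x \in E by rewrite Edef !inE eqxx.
rewrite E' !inE => /orP [/eqP xx|/eqP xy].
  by rewrite xx x'c in xn.
by rewrite xy y'c in xn.
Qed.

Lemma ce_rec v u : e v u ->
  #|ce v u| = (\sum_(c in nbhd e v :\ u) (1 + #|ce c v|))%N.
Proof.
move=> evu; rewrite card_sum_ind.
rewrite (eq_bigr _ (fun E _ => @ce_point v u E evu)) exchange_big /=.
by apply: eq_bigr => c _; rewrite big_split /= sum_eq1 card_sum_ind.
Qed.

Variables (i j : T).
Hypothesis Hij : e i j.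

Local Notation C := (cd i j).

Definition up (a b : T) := [&& e a b, a \in C, b \in C & j \in cd b a].
Definition ch (v : T) : {set T} := [set c | up c v].

Lemma jC : j \notin C.
Proof. exact: S1 Hij. Qed.

Lemma iC : i \in C.
Proof. exact: cd_self. Qed.

Lemma C_neq_j v : v \in C -> j != v.
Proof. by move=> vC; apply/eqP => jv; move: jC; rewrite {1}jv vC. Qed.

Lemma C_adj v w : v \in C -> e v w -> w != j -> w \in C.
Proof.
move=> vC evw wj; apply: (S2 vC evw); apply: neq_pair'; first exact: C_neq_j.
by rewrite eq_sym.
Qed.

Lemma Cj_adj v : v \in C -> e v j -> v = i.
Proof.
move=> vC evj; apply/eqP; apply/negPn/negP => vi.
have ij : i != j by apply: contraTneq Hij => ->; rewrite Hirr.
move: jC; rewrite (S2 vC evj) //; apply: neq_pair; by rewrite // eq_sym.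
Qed.

Lemma top_ex v : v \in C -> exists2 t, e v t & j \in cd t v.
Proof.
move=> vC; have /connectP [p pp jl] := Hconn v j.
case: (shortenP pp) jl => p' pp' up' _ jl.
case: p' pp' up' jl => [|t p''] /= pp' up' jl.
  by move: (C_neq_j vC); rewrite jl eqxx.
move: pp' => /andP [evt pt]; move: up'; rewrite inE negb_or => /andP [/andP [vt vp] _].
exists t => //; rewrite in_cd; apply/connectP; exists p'' => //.
apply: (@sub_path _ (del v t)); first by move=> x' y'; rewrite delC.
by apply: path_avoid => //; rewrite inE negb_or vt.
Qed.

Lemma top_uniq v t t' : e v t -> e v t' -> j \in cd t v -> j \in cd t' v -> t = t'.
Proof.
move=> evt evt' jt jt'; apply/eqP; apply/negPn/negP => ttv'.
by move: (S6 evt evt' ttv' jt); rewrite jt'.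
Qed.

Lemma up_e a b : up a b -> e a b.
Proof. by case/and4P. Qed.

Lemma up_iff v c : v \in C -> e v c -> up c v = (j \notin cd c v).
Proof.
move=> vC evc; apply/idP/idP.
  by case/and4P => ecv cC _ jv; apply: S4 (evc) jv.
move=> jn; have cj : c != j by apply: contraNneq jn => ->; rewrite cd_self.
rewrite /up (eS evc) vC (C_adj vC evc cj) /=.
by move: (S3 j evc); rewrite (negbTE jn) orbF.
Qed.

Lemma up_not a b : up a b -> ~~ up b a.
Proof.
case/and4P => eab _ _ jba; apply/negP => /and4P [_ _ _ jab].
by move: (S4 eab jab); rewrite jba.
Qed.

Lemma up_cover u v : e u v -> u \in C -> v \in C -> up u v || up v u.
Proof.
move=> euv uC vC; rewrite /up euv (eS euv) uC vC /=.
by rewrite orbC; apply: S3.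
Qed.

Lemma ch_eq v t : v \in C -> e v t -> j \in cd t v -> ch v = nbhd e v :\ t.
Proof.
move=> vC evt jt; apply/setP => c; rewrite !inE.
case: (boolP (e v c)) => evc; last first.
  by rewrite andbF; apply/negbTE; apply: contra evc => /up_e; rewrite Hsym.
rewrite andbT (up_iff vC evc); apply/idP/idP.
  by apply: contraNneq => ->.
move=> ct; apply/negP => jc; move: ct; by rewrite (top_uniq evc evt jc jt) eqxx.
Qed.

Lemma deg_ch v t : v \in C -> e v t -> j \in cd t v -> deg e v = (#|ch v|).+1.
Proof.
move=> vC evt jt; rewrite (ch_eq vC evt jt) /deg (cardsD1 t (nbhd e v)).
by rewrite !inE evt add1n.
Qed.

Lemma K_E v t : v \in C -> e v t -> j \in cd t v ->
  #|comp_edges e v t| = (\sum_(c in ch v) (1 + #|comp_edges e c v|))%N.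
Proof. by move=> vC evt jt; rewrite (ch_eq vC evt jt) ce_rec. Qed.

Section Pot.
Variable R : realType.
Local Open Scope ring_scope.

Definition Ev a b : R := (#|comp_edges e a b|)%:R.
Definition dg v : R := (deg e v)%:R.
Definition K v : R := \sum_(c in ch v) (1 + Ev c v).
Definition g b a : R := (2 * (dg b - 1) * K b - 2 - 2 * Ev a b) / dg b.
Definition ttv a b : R := 1 + g b a.
Definition Psi v : R := \sum_(p : T * T | up p.1 p.2 && (v \in cd p.1 p.2)) ttv p.1 p.2.

Lemma Psi_i : Psi i = 0.
Proof.
rewrite /Psi big1 // => [[a b]] /= /andP [/and4P [eab aC bC jba] ia].
exfalso; have ja : j \in cd a b.
  apply: (S2 ia Hij); rewrite eq_sym; apply: neq_pair'; exact: C_neq_j.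
by move: (S4 eab ja); rewrite jba.
Qed.

Lemma Psi_up w v : up w v -> Psi w = ttv w v + Psi v.
Proof.
move=> uwv; have ewv := up_e uwv.
have vw : v \notin cd w v by apply: S1.
rewrite /Psi (bigD1 (w, v)) /=; last by rewrite uwv cd_self.
congr (_ + _); apply: eq_bigl => [[a b]] /=.
case: (boolP (up a b)) => uab //=.
case: (boolP ((a, b) == (w, v))) => [/eqP [-> ->]|neq]; first by rewrite andbF (negbTE vw).
rewrite andbT.
case: (boolP ([set w; v] == [set a; b])) => [/eqP Hs|ne].
  exfalso; have eab := up_e uab.
  have : a \in [set w; v] by rewrite Hs !inE eqxx.
  have : b \in [set w; v] by rewrite Hs !inE eqxx orbT.
  have ab : a != b by apply: contraTneq eab => ->; rewrite Hirr.
  rewrite !inE => /orP [/eqP bw|/eqP bv] /orP [/eqP aw|/eqP av].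
  - by move: ab; rewrite aw bw eqxx.
  - by move: (up_not uwv); rewrite -av -bw uab.
  - by move: neq; rewrite aw bv eqxx.
  - by move: ab; rewrite av bv eqxx.
apply/idP/idP => H.
  by apply: (S2 H ewv ne).
by apply: (S2 H (eS ewv)); rewrite pairC.
Qed.

Lemma Ev_ge0 a b : 0 <= Ev a b.
Proof. exact: ler0n. Qed.

Lemma K_ge v c : up c v -> 1 + Ev c v <= K v.
Proof.
move=> ucv; rewrite /K (bigD1 c) /=; last by rewrite inE.
by rewrite lerDl sumr_ge0 // => x _; rewrite addr_ge0 ?ler01 ?Ev_ge0.
Qed.

Lemma K_ge0 v : 0 <= K v.
Proof. by rewrite /K sumr_ge0 // => x _; rewrite addr_ge0 ?ler01 ?Ev_ge0. Qed.

Lemma dg_ch v t : v \in C -> e v t -> j \in cd t v -> dg v = (#|ch v|)%:R + 1.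
Proof. by move=> vC evt jt; rewrite /dg (deg_ch vC evt jt) -addn1 natrD. Qed.

Lemma up_C2 a b : up a b -> b \in C.
Proof. by case/and4P. Qed.

Lemma up_C1 a b : up a b -> a \in C.
Proof. by case/and4P. Qed.

Lemma g_ge0 b a : up a b -> 0 <= g b a.
Proof.
move=> uab; have bC := up_C2 uab; have [t ebt jt] := top_ex bC.
rewrite /g (dg_ch bC ebt jt); set m := (#|ch b|)%:R.
have m1 : 1 <= m.
  by rewrite /m (ler_nat _ 1) card_gt0; apply/set0Pn; exists a; rewrite inE.
have Kg := K_ge uab; have E0 := Ev_ge0 a b; have K0 := K_ge0 b.
have m0 : 0 <= m + 1 by rewrite (le_trans ler01) // ler_wpDl // (le_trans ler01).
rewrite divr_ge0 // addrK.
have : 0 <= (m - 1) * K b by rewrite mulr_ge0 // subr_ge0.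
nra.
Qed.

Lemma tt_ge0 a b : up a b -> 0 <= ttv a b.
Proof. by move=> uab; rewrite /ttv addr_ge0 ?ler01 ?g_ge0. Qed.

Lemma Psi_ge0 v : 0 <= Psi v.
Proof. by rewrite /Psi sumr_ge0 // => [[a b]] /andP [uab _]; apply: tt_ge0. Qed.

Lemma sum_g v t : v \in C -> e v t -> j \in cd t v ->
  \sum_(c in ch v) (2 + 2 * Ev c v + g v c) = 2 * (dg v - 1) * K v.
Proof.
move=> vC evt jt; rewrite big_split /=.
have s1 : \sum_(c in ch v) (2 + 2 * Ev c v) = 2 * K v.
  by rewrite /K big_distrr; apply: eq_bigr => c _; rewrite /= mulrDr mulr1.
have s2 : \sum_(c in ch v) g v c =
    ((#|ch v|)%:R * (2 * (dg v - 1) * K v) - 2 * K v) / dg v.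
  rewrite /g -big_distrl /=; congr (_ / _).
  rewrite -s1 (eq_bigr (fun c => 2 * (dg v - 1) * K v - (2 + 2 * Ev c v))); last by move=> c _; ring.
  by rewrite sumrB sumr_const (mulr_natl (2 * (dg v - 1) * K v)).
rewrite s1 s2 (dg_ch vC evt jt).
set m := (#|ch v|)%:R; have m0 : 0 <= m by apply: ler0n.
by field; apply/lt0r_neq0; rewrite ltr_wpDl.
Qed.

Definition tau u v : R :=
  if v == j then 0
  else if (u == i) && (v == i) then 1 + 2 * Ev i j * ((dg i - 1) / dg i)
  else if up u v then Psi u else 1 + 2 * Ev v u + Psi v.

Definition Good u v := ((u == i) && (v == i)) || (e u v && (u \in C)).

Lemma sum_bb u v (F : T -> R) : \sum_w bb_step R e u v w * F w =
  if #|nbhd e v :\ u| == 0%N then F u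
  else (\sum_(w in nbhd e v :\ u) F w) / (#|nbhd e v :\ u|)%:R.
Proof.
rewrite /bb_step; case: ifP => A0.
  by rewrite (bigD1 u) //= eqxx mul1r big1 ?addr0 // => w /negbTE ->; rewrite mul0r.
rewrite big_distrl /= [RHS]big_mkcond /=; apply: eq_bigr => w _.
by case: (w \in nbhd e v :\ u); rewrite /= ?mul1r ?mul0r // mulrC.
Qed.

Lemma Ev_K v t : v \in C -> e v t -> j \in cd t v -> Ev v t = K v.
Proof.
move=> vC evt jt; rewrite /Ev (K_E vC evt jt) natr_sum; apply: eq_bigr => c _.
by rewrite natrD.
Qed.

Lemma tau_desc u v : up v u -> tau u v = 1 + 2 * Ev v u + Psi v.
Proof.
move=> uvu; have vC := up_C1 uvu; have evu := up_e uvu.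
rewrite /tau eq_sym (negbTE (C_neq_j vC)).
have -> : (u == i) && (v == i) = false.
  by apply/negbTE; apply/negP => /andP [/eqP ui /eqP vi]; move: evu; rewrite ui vi Hirr.
by rewrite (negbTE (up_not uvu)).
Qed.

Lemma tau_asc u v : up u v -> tau u v = Psi u.
Proof.
move=> uuv; have vC := up_C2 uuv; have euv := up_e uuv.
rewrite /tau eq_sym (negbTE (C_neq_j vC)).
have -> : (u == i) && (v == i) = false.
  by apply/negbTE; apply/negP => /andP [/eqP ui /eqP vi]; move: euv; rewrite ui vi Hirr.
by rewrite uuv.
Qed.

Lemma tau_child v x : up x v -> tau v x = 2 + 2 * Ev x v + g v x + Psi v.
Proof. by move=> uxv; rewrite tau_desc // (Psi_up uxv) /ttv; ring. Qed.

Lemma tau_top v t : v \in C -> e v t -> j \in cd t v -> tau v t = Psi v.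
Proof.
move=> vC evt jt; case: (t =P j) => [tj|/eqP tj].
  have vi : v = i by apply: Cj_adj => //; rewrite -tj.
  by rewrite /tau tj eqxx vi Psi_i.
apply: tau_asc; rewrite /up evt vC (C_adj vC evt tj) jt.
by [].
Qed.

Lemma card_ch_pos v c : up c v -> (0 < #|ch v|)%N.
Proof. by move=> ucv; rewrite card_gt0; apply/set0Pn; exists c; rewrite inE. Qed.

Lemma H1 u v : Good u v ->
  tau u v = (v != j)%:R * (1 + \sum_w bb_step R e u v w * tau v w).
Proof.
move=> G; case: (v =P j) => [->|/eqP vj]; first by rewrite /tau eqxx mul0r.
rewrite /= mul1r sum_bb.
case/orP: G => [/andP [/eqP -> /eqP vi]|/andP [euv uC]].
  rewrite vi.
  have Ai : nbhd e i :\ i = nbhd e i.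
    by apply/setP => x; rewrite !inE; case: (x =P i) => // ->; rewrite Hirr.
  rewrite Ai.
  have degi : deg e i = (#|ch i|).+1 by apply: (deg_ch iC Hij); exact: cd_self.
  rewrite -/(deg e i) degi /=.
  rewrite (big_setD1 j) /=; last by rewrite !inE.
  rewrite -(ch_eq iC Hij (cd_self j i)).
  rewrite (eq_bigr (fun w => 2 + 2 * Ev w i + g i w)); last first.
    by move=> w; rewrite inE => uwi; rewrite tau_child // Psi_i addr0.
  rewrite (sum_g iC Hij (cd_self j i)) -(Ev_K iC Hij (cd_self j i)).
  have -> : tau i j = 0 by rewrite /tau eqxx.
  have -> : tau i i = 1 + 2 * Ev i j * ((dg i - 1) / dg i).
    by rewrite /tau eq_sym (negbTE (C_neq_j iC)) eqxx.
  rewrite /dg /deg -/(deg e i) degi add0r; ring.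
have vC := C_adj uC euv vj.
have [t evt jt] := top_ex vC.
have degv := deg_ch vC evt jt.
have dgv := dg_ch vC evt jt.
case/orP: (up_cover euv uC vC) => [uuv|uvu].
  have tu : t != u.
    apply/eqP => tu; move: uuv; rewrite (up_iff vC (eS euv)) -tu jt.
    by [].
  have tA : t \in nbhd e v :\ u by rewrite !inE tu evt.
  have cardA : #|nbhd e v :\ u| = #|ch v|.
    by apply/eq_add_S; rewrite -degv /deg (cardsD1 u (nbhd e v)) !inE (eS euv).
  rewrite cardA.
  have m0 := card_ch_pos uuv.
  have -> : (#|ch v| == 0%N) = false by apply/negbTE; rewrite -lt0n.
  rewrite (big_setD1 t) //= (tau_top vC evt jt).
  have -> : nbhd e v :\ u :\ t = ch v :\ u.
    rewrite (ch_eq vC evt jt); apply/setP => x; rewrite !inE.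
    by case: (x == t); case: (x == u).
  rewrite (eq_bigr (fun w => 2 + 2 * Ev w v + g v w + Psi v)); last first.
    by move=> w; rewrite !inE => /andP [_ uwv]; apply: tau_child.
  have S := sum_g vC evt jt.
  rewrite (big_setD1 u) /= in S; last by rewrite inE.
  have S2 : \sum_(c in ch v :\ u) (2 + 2 * Ev c v + g v c + Psi v) =
      \sum_(c in ch v :\ u) (2 + 2 * Ev c v + g v c) + (#|ch v| - 1)%:R * Psi v.
    rewrite big_split /= sumr_const; congr (_ + _); rewrite mulr_natl; congr (_ *+ _).
    by rewrite (cardsD1 u (ch v)) inE uuv add1n subn1.
  rewrite S2.
  have -> : \sum_(c in ch v :\ u) (2 + 2 * Ev c v + g v c) =
     2 * (dg v - 1) * K v - (2 + 2 * Ev u v + g v u) by rewrite -S; ring.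
  rewrite (tau_asc uuv) (Psi_up uuv) /ttv.
  rewrite /g dgv natrB // .
  set m := (#|ch v|)%:R.
  have m1 : 1 <= m by rewrite (ler_nat _ 1).
  field.
  apply/andP; split; apply/lt0r_neq0; [exact: (lt_le_trans ltr01 m1)|].
  by rewrite ltr_wpDl // (le_trans ler01).
have ju : j \in cd u v by case/and4P: uvu.
have evu := eS euv.
rewrite (tau_desc uvu) (Ev_K vC evu ju).
rewrite -(ch_eq vC evu ju).
case: (boolP (#|ch v| == 0%N)) => [/eqP c0|c0] /=.
  rewrite (tau_asc uvu) /K (cards0_eq c0) big_set0; ring.
rewrite (eq_bigr (fun w => 2 + 2 * Ev w v + g v w + Psi v)); last first.
  by move=> w; rewrite inE => uwv; apply: tau_child.
rewrite big_split /= (sum_g vC evu ju) sumr_const -mulr_natl.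
rewrite (dg_ch vC evu ju).
set m := (#|ch v|)%:R.
have m0 : m != 0 by rewrite pnatr_eq0.
field.
by [].
Qed.

Lemma H2 u v w : Good u v -> v != j -> bb_step R e u v w != 0 -> Good v w.
Proof.
move=> G vj bb0; have vC : v \in C.
  case/orP: G => [/andP [_ /eqP ->]|/andP [euv uC]]; first exact: iC.
  exact: C_adj uC euv vj.
rewrite /Good vC andbT; apply/orP; right; move: bb0.
rewrite /bb_step; case: ifP => A0.
  case: (w =P u) => [->|]; last by rewrite /= eqxx.
  move=> _; case/orP: G => [/andP [/eqP ui /eqP vi]|/andP [euv _]]; last exact: (eS euv).
  exfalso; move: A0; rewrite ui vi; apply/negP; rewrite -lt0n card_gt0.
  by apply/set0Pn; exists j; rewrite !inE Hij andbT; apply: C_neq_j; exact: iC.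
by case: (boolP (w \in nbhd e v :\ u)) => [|_]; [rewrite !inE => /andP [] | rewrite mul0r eqxx].
Qed.

Lemma H3 u v : 0 <= tau u v.
Proof.
rewrite /tau; case: (v == j) => //; case: ((u == i) && (v == i)).
  have [t eit jt] := top_ex iC.
  rewrite (dg_ch iC eit jt) addrK addr_ge0 ?ler01 // mulr_ge0 ?mulr_ge0 ?ler0n //.
case: (up u v); first exact: Psi_ge0.
by rewrite !addr_ge0 ?ler01 ?Psi_ge0 // mulr_ge0 ?ler0n.
Qed.

Lemma path_prob_tail s : path_prob R e i s = tail_prob R e i i s.
Proof.
case: s => [|x s] //=; congr (_ * _).
have Ai : nbhd e i :\ i = nbhd e i.
  by apply/setP => y; rewrite !inE; case: (y =P i) => // ->; rewrite Hirr.
rewrite /bb_step Ai /deg.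
have -> : (#|nbhd e i| == 0%N) = false.
  apply/negbTE; rewrite -lt0n card_gt0; apply/set0Pn; exists j; by rewrite inE.
by rewrite inE.
Qed.

End Pot.

End Tree.


Theorem lemma7 (R : realType) (T : finType) (e : rel T)
  (Hsimple : simple_graph e) (Htree : is_tree e) (i j : T) (Hij : e i j) :
  access_time R e i j =
  (1 + 2 * (#|comp_edges e i j|)%:R * (((deg e i)%:R - 1) / (deg e i)%:R) : R)%:E.
Proof.
case: Hsimple => Hsym Hirr; case: Htree => Hconn Hacyc.
have h1 := @H1 _ _ Hsym Hirr Hconn Hacyc i j Hij R.
have h2 := @H2 _ _ Hsym Hirr Hacyc i j Hij R.
have h3 : forall u v, Good e i j u v -> 0 <= tau e i j R u v.
  by move=> u v _; apply: (H3 Hsym Hirr Hconn Hacyc Hij).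
have GoodI : Good e i j i i by rewrite /Good !eqxx.
have f1 := F1 h1 h2 h3 GoodI.
have f2 := F2 h1 h2 h3 GoodI.
have hp : hit_prob R e i j = fun n => fh R e j n i i.
  apply: funext => n; rewrite /hit_prob /fh; apply: eq_bigr => s _.
  by rewrite (path_prob_tail Hirr Hij).
rewrite /access_time hp f1 asboolT // f2; congr (_%:E).
have ij : (i == j) = false by apply/negbTE; apply: contraTneq Hij => ->; rewrite Hirr.
by rewrite /tau ij eqxx /Ev /dg mulrA.
Qed.
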